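(* For a random set of $n$ source symbols and a corresponding regular IBLT with $m$ coded symbols, the probability that the peeling decoder can recover at least one source symbol decreases exponentially in $n/m$.
   Context: A regular IBLT with parameters $m,k$ consists of $m$ coded symbols; each source symbol is mapped to $k$ of the $m$ coded symbols chosen uniformly at random (independently for different source symbols). The peeling decoder repeatedly finds a pure coded symbol (one with exactly one not-yet-recovered source symbol mapped to it), recovers that source symbol, and removes it from all coded symbols it is mapped to, stopping when no pure coded symbol remains; in particular it recovers nothing if initially no coded symbol is pure. *)

(* Defs.v *)
From HB Require Import structures.
From mathcomp Require Import all_boot all_order all_algebra.
From mathcomp Require Import all_classical all_reals all_analysis.
Set Implicit Arguments. Unset Strict Implicit. Unset Printing Implicit Defensive.

(* A regular IBLT with parameters m, k on n source symbols (indexed by 'I_n):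
   a mapping [A : {ffun 'I_n -> {set 'I_m}}] giving, for each source symbol,
   the set of coded symbols it is mapped to. *)
Definition iblt_valid (n m k : nat) (A : {ffun 'I_n -> {set 'I_m}}) : bool :=
  [forall i, #|A i| == k].

Definition remaining (n m : nat) (A : {ffun 'I_n -> {set 'I_m}})
  (R : {set 'I_n}) (j : 'I_m) : {set 'I_n} :=
  [set i | (i \notin R) && (j \in A i)].

Definition pure (n m : nat) (A : {ffun 'I_n -> {set 'I_m}})
  (R : {set 'I_n}) (j : 'I_m) : bool :=
  #|remaining A R j| == 1.

Definition peel_step (n m : nat) (A : {ffun 'I_n -> {set 'I_m}})
  (R : {set 'I_n}) : {set 'I_n} :=
  match [pick j | pure A R j] with
  | Some j => R :|: remaining A R j
  | None => R
  end.

(* the peeling decoder: at most n recoveries are possible, so n steps suffice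
   to reach the point where no pure coded symbol remains *)
Definition peel_recovered (n m : nat) (A : {ffun 'I_n -> {set 'I_m}}) : {set 'I_n} :=
  iter n (peel_step A) finset.set0.

(* Probability (uniform over all valid mappings, i.e. each source symbol's
   k coded symbols chosen uniformly at random, independently) that the
   peeling decoder recovers at least one source symbol. *)
Definition prob_recover_some (R : realType) (n m k : nat) : R :=
  (#|[set A : {ffun 'I_n -> {set 'I_m}} |
        iblt_valid k A && (peel_recovered A != finset.set0)]|%:R /
   #|[set A : {ffun 'I_n -> {set 'I_m}} | iblt_valid k A]|%:R)%R.

(* Main.v *)
Require Import Defs.
From HB Require Import structures.
From mathcomp Require Import all_boot all_order all_algebra.
From mathcomp Require Import all_classical all_reals all_analysis.
Import Order.TTheory GRing.Theory Num.Theory.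
Local Open Scope ring_scope.

Lemma foldr_prod (T : Type) (f : T -> nat) (s : seq T) :
  foldr muln 1 [seq f x | x <- s] = (\prod_(x <- s) f x)%N.
Proof. by elim: s => [|x s IH]; rewrite ?big_nil ?big_cons //= IH. Qed.

Lemma card_fam (n m : nat) (F : 'I_n -> {set {set 'I_m}}) :
  #|[set A : {ffun 'I_n -> {set 'I_m}} | [forall i, A i \in F i]]| = (\prod_i #|F i|)%N.
Proof.
have := @card_family _ (fun _ => {set 'I_m}) (fun i => mem (F i)).
rewrite /image_mem foldr_prod big_map => H.
transitivity #|(family (fun i => mem (F i)) : simpl_pred {ffun 'I_n -> {set 'I_m}})|; last first.
  by rewrite H.
apply: eq_card => A; rewrite inE; apply/forallP/familyP => H' i; exact: H'.
Qed.

Lemma card_bigcup_le (T I : finType) (F : I -> {set T}) :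
  (#|(\bigcup_i F i)%SET| <= \sum_i #|F i|)%N.
Proof.
elim/big_rec2: _ => [|i s U _ H]; first by rewrite cards0.
 rewrite cardsU; apply: leq_trans (leq_subr _ _) _.
by rewrite leq_add2l.
Qed.

Definition Fm (m k : nat) (j : 'I_m) (b : bool) : {set {set 'I_m}} :=
  [set S : {set 'I_m} | (#|S| == k) && ((j \in S) == b)].

Arguments Fm {m} k j b.

Definition Ev (n m k : nat) (j : 'I_m) (i : 'I_n) : {set {ffun 'I_n -> {set 'I_m}}} :=
  [set A : {ffun 'I_n -> {set 'I_m}} | [forall i', A i' \in Fm k j (i' == i)]].

Arguments Ev {n m} k j i.

Lemma card_Fm_false m k (j : 'I_m) : #|Fm k j false| = 'C(m.-1, k).
Proof.
have -> : m.-1 = #|[set~ j]| by rewrite cardsC1 card_ord.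
rewrite -cards_draws.
apply: eq_card => S; rewrite !inE andbC; congr (_ && _).

apply/idP/idP => [H|H].
  apply/fintype.subsetP => x xS; rewrite !inE; apply/eqP => xj; move: H; by rewrite -xj xS.
rewrite eqbF_neg; apply/negP => /(fintype.subsetP H); by rewrite !inE eqxx.
Qed.

Lemma card_Fm_true m k (j : 'I_m) :
  (#|Fm k j true| + 'C(m.-1, k) = 'C(m, k))%N.
Proof.
rewrite -(@card_Fm_false m k j) -[in RHS](card_ord m) -card_draws.
rewrite -[RHS](cardsID [set S : {set 'I_m} | j \in S]); congr (_ + _)%N; apply: eq_card => S;
  rewrite !inE; by case: (j \in S); rewrite ?andbT ?andbF.
Qed.

Lemma card_Ev n m k (j : 'I_m) (i : 'I_n) :
  #|Ev k j i| = (#|Fm k j true| * 'C(m.-1, k) ^ n.-1)%N.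
Proof.
rewrite /Ev card_fam (bigD1 i) //= eqxx; congr (_ * _)%N.
rewrite (eq_bigr (fun _ => 'C(m.-1, k))) => [|i' /negbTE ->]; last exact: (@card_Fm_false m k j).
by rewrite prod_nat_const cardC1 card_ord.
Qed.

Lemma card_valid n m k :
  #|[set A : {ffun 'I_n -> {set 'I_m}} | iblt_valid k A]| = ('C(m, k) ^ n)%N.
Proof.
have -> : [set A : {ffun 'I_n -> {set 'I_m}} | iblt_valid k A] =
  [set A : {ffun 'I_n -> {set 'I_m}} | [forall i, A i \in [set S : {set 'I_m} | #|S| == k]]].
  by apply/setP => A; rewrite !inE; apply/forallP/forallP => H i; move: (H i); rewrite inE.
by rewrite card_fam prod_nat_const card_ord card_draws card_ord.
Qed.

Lemma peel_nonempty n m (A : {ffun 'I_n -> {set 'I_m}}) :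
  peel_recovered A != finset.set0 -> exists j, pure A finset.set0 j.
Proof.
move=> H; case: (pickP (fun j => pure A finset.set0 j)) => [j Hj|H0]; first by exists j.
exfalso; move: H; rewrite /peel_recovered.
have step : peel_step A finset.set0 = finset.set0 by rewrite /peel_step; case: pickP => // j; rewrite H0.
suff -> : forall t, iter t (peel_step A) finset.set0 = finset.set0 by rewrite eqxx.
by elim => //= t ->.
Qed.

Lemma event_sub n m k :
  [set A : {ffun 'I_n -> {set 'I_m}} | iblt_valid k A && (peel_recovered A != finset.set0)]
  \subset (\bigcup_(p : 'I_m * 'I_n) Ev k p.1 p.2)%SET.
Proof.
apply/fintype.subsetP => A; rewrite inE => /andP[/forallP V /peel_nonempty [j]].
rewrite /pure => /cards1P [i Hi].
apply/bigcupP; exists (j, i) => //=; rewrite inE; apply/forallP => i'.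
rewrite inE V /=.
move/setP: Hi => /(_ i'); rewrite /remaining !inE /= => ->.
by [].
Qed.

From mathcomp Require Import ring.

Theorem theoremA1 (R : realType) (n m k : nat) (hk : (0 < k)%N) (hkm : (k <= m)%N) :
  prob_recover_some R n m k <=
    (n * k)%:R * expR (- ((k * (n - 1))%:R / m%:R)).
Proof.
set c := 'C(m, k); set b := 'C(m.-1, k).
have cpos : (0 < c)%N by rewrite bin_gt0.
have mpos : (0 < m)%N by apply: leq_trans hkm.
have hmb : (m * b = (m - k) * c)%N by rewrite mul_bin_down.
have hma : (m * (c - b) = k * c)%N.
  rewrite mulnBr hmb mulnBl subKn //; by rewrite leq_mul2r hkm orbT.
set N := #|[set A : {ffun 'I_n -> {set 'I_m}} | iblt_valid k A && (peel_recovered A != finset.set0)]|.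
have hN : (N <= m * n * (c - b) * b ^ n.-1)%N.
  apply: leq_trans (subset_leq_card (event_sub n m k)) _.
  apply: (leq_trans (@card_bigcup_le _ _ (fun p : 'I_m * 'I_n => Ev k p.1 p.2))).
  rewrite (eq_bigr (fun _ => (c - b) * b ^ n.-1)%N); last first.
    by move=> p _; rewrite card_Ev /c /b -(@card_Fm_true m k p.1) addnK.
  by rewrite sum_nat_const card_prod !card_ord mulnA.
rewrite /prob_recover_some card_valid -/N -/c.
have cR : (c%:R : R) != 0 by rewrite pnatr_eq0 -lt0n.
have mR : (m%:R : R) != 0 by rewrite pnatr_eq0 -lt0n.
case: n N hN => [|n'] N hN.
  move: hN; rewrite muln0 mul0n leqn0 => /eqP ->; by rewrite mul0r mul0r.
rewrite subn1 /=.
apply: le_trans (_ : (m * n'.+1 * (c - b) * b ^ n')%:R / (c ^ n'.+1)%:R <= _).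
  by apply: ler_wpM2r; [rewrite invr_ge0 ler0n | rewrite ler_nat].
rewrite [(m * _ * (c - b))%N]mulnAC hma.
have hbc : (b%:R / c%:R : R) = 1 - k%:R / m%:R.
  have hmbR : (m%:R * b%:R = (m%:R - k%:R) * c%:R :> R) by rewrite -natrB // -!natrM hmb.
  rewrite -[X in X / _](mulKf mR) hmbR; field; by rewrite cR mR.
have -> : ((k * c * n'.+1 * b ^ n')%:R / (c ^ n'.+1)%:R : R) =
    (n'.+1 * k)%:R * (b%:R / c%:R) ^+ n'.
  rewrite !natrM !natrX expr_div_n exprS; field; by rewrite cR expf_neq0.
apply: ler_wpM2l; first exact: ler0n.
have -> : (- ((k * n')%:R / m%:R) : R) = n'%:R * (- (k%:R / m%:R)).
  rewrite natrM; field; exact: mR.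
rewrite expRM_natl; apply: lerXn2r.
- by rewrite nnegrE divr_ge0 // ler0n.
- by rewrite nnegrE expR_ge0.
- by rewrite hbc; have := expR_ge1Dx (- (k%:R / m%:R : R)).
Qed.
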